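(* Let $k\ge2$, $n\ge1$ be integers, let $\bar{\mathcal{P}}\in\mathbb{R}^{[k,n]}$ be a columnwise-substochastic tensor, $\mathbf{v}\in\mathbb{R}^n$ a stochastic vector and $\alpha\in[0,1)$ with $\varsigma:=(2k-3)\alpha(1-\alpha)^{-\frac{k-2}{k-1}}<1$. Then the MLPPR system $(\mathbf{e}^T\mathbf{y})^{k-2}\mathbf{y}-\alpha\bar{\mathcal{P}}\mathbf{y}^{k-1}=\mathbf{v}$ has a unique nonnegative solution $\mathbf{y}_*$ in $\Delta:=\{\mathbf{y}\in\mathbb{R}^n_+:\mathbf{e}^T\mathbf{y}\le(1-\alpha)^{-\frac{1}{k-1}}\}$.
   Context: For $\mathcal{P}\in\mathbb{R}^{[k,n]}$ (real tensors of order $k$, dimension $n$) and $\mathbf{y}\in\mathbb{R}^n$, $(\mathcal{P}\mathbf{y}^{k-1})_i=\sum_{i_2,\dots,i_k}p_{i i_2\dots i_k}y_{i_2}\cdots y_{i_k}$. $\bar{\mathcal{P}}$ is columnwise-substochastic if its entries are nonnegative and $\sum_{i}\bar p_{i i_2\dots i_k}\le1$ for all $i_2,\dots,i_k$. $\mathbf{e}$ is the all-ones vector; a stochastic vector is nonnegative with entries summing to $1$. The MLPPR system $(I\circ\mathbf{e}^{\circ(k-2)}-\alpha\bar{\mathcal{P}})\mathbf{y}^{k-1}=\mathbf{v}$ is exactly $(\mathbf{e}^T\mathbf{y})^{k-2}\mathbf{y}-\alpha\bar{\mathcal{P}}\mathbf{y}^{k-1}=\mathbf{v}$. *)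

(* Defs.v *)
From HB Require Import structures.
From mathcomp Require Import all_boot all_order all_algebra.
From mathcomp Require Import reals exp.
Set Implicit Arguments. Unset Strict Implicit. Unset Printing Implicit Defensive.
Import Order.TTheory GRing.Theory Num.Theory.
Local Open Scope ring_scope.

(* A real tensor of order k and dimension n: entry p_{i i_2 ... i_k} is
   P i f, where f : 'I_(k-1) -> 'I_n lists the indices (i_2,...,i_k). *)
Definition tensor (R : realType) (k n : nat) :=
  'I_n -> {ffun 'I_k.-1 -> 'I_n} -> R.

Definition tapply (R : realType) (k n : nat) (P : tensor R k n)
    (y : 'I_n -> R) (i : 'I_n) : R :=
  \sum_(f : {ffun 'I_k.-1 -> 'I_n}) P i f * \prod_(j < k.-1) y (f j).

Definition col_substochastic (R : realType) (k n : nat) (P : tensor R k n) :=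
  (forall i f, 0 <= P i f) /\ (forall f, \sum_(i < n) P i f <= 1).

Definition stochastic_vec (R : realType) (n : nat) (v : 'I_n -> R) :=
  (forall i, 0 <= v i) /\ \sum_(i < n) v i = 1.

Definition mlppr_sol (R : realType) (k n : nat) (alpha : R) (P : tensor R k n)
    (v y : 'I_n -> R) :=
  forall i, (\sum_(j < n) y j) ^+ (k - 2) * y i - alpha * tapply P y i = v i.

Definition in_Delta (R : realType) (k n : nat) (alpha : R) (y : 'I_n -> R) :=
  (forall i, 0 <= y i) /\
  \sum_(i < n) y i <= powR (1 - alpha) (- (1 / (k%:R - 1))).

Definition varsigma (R : realType) (k : nat) (alpha : R) : R :=
  (2 * k - 3)%:R * alpha * powR (1 - alpha) (- ((k%:R - 2) / (k%:R - 1))).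

(* Main.v *)
Require Import Defs.
From HB Require Import structures.
From mathcomp Require Import all_boot all_order all_algebra.
From mathcomp Require Import all_classical all_reals all_analysis.
From mathcomp Require Import ring lra zify.
Set Implicit Arguments. Unset Strict Implicit. Unset Printing Implicit Defensive.
Import Order.TTheory GRing.Theory Num.Theory.
Import numFieldNormedType.Exports.
Local Open Scope classical_set_scope.
Local Open Scope ring_scope.

HB.instance Definition _ (R : realType) (m n : nat) :=
  Uniform_isComplete.Build 'M[R]_(m, n) (@mx_complete R m n).

Lemma banach_rV (R : realType) n (U : set 'rV[R]_n) (G : 'rV[R]_n -> 'rV[R]_n) (q : R) :
  0 <= q -> q < 1 -> (forall x, U x -> U (G x)) ->
  (forall x y, U x -> U y -> `|G x - G y| <= q * `|x - y|) ->
  closed U -> U !=set0 -> exists2 p, U p & p = G p.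
Proof.
move=> q0 q1 GU Glip cU U0.
pose Gf : {fun U >-> U} := HB.pack G (isFun.Build _ _ U U G GU).
have ctr : is_contraction Gf.
  exists (NngNum q0); split => //.
  move=> [x y] /= [Ux Uy]; exact: Glip.
exact: (@banach_fixed_point R ('rV[R]_n : completeNormedModType R) _ _ ctr).
Qed.

Definition Usimp (R : realType) n : set 'rV[R]_n :=
  [set x | (forall i, 0 <= x ord0 i) /\ \sum_i x ord0 i = 1].

Lemma Usimp_closed (R : realType) n : closed (@Usimp R n).
Proof.
have -> : @Usimp R n = (\bigcap_(i in setT) [set x : 'rV[R]_n | 0 <= x ord0 i]) `&`
    ((fun x : 'rV[R]_n => \sum_i x ord0 i) @^-1` [set 1]).
  apply/seteqP; split => x /=.
    by move=> [h1 h2]; split => // i _; exact: h1.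
  by move=> [h1 h2]; split => // i; exact: h1 i I.
apply: closedI.
  apply: closed_bigI => i _.
  apply: (@preimage_closed _ _ (fun x : 'rV[R]_n => x ord0 i) [set r : R | 0 <= r]).
    by move=> x _; apply: coord_continuous.
  exact: closed_ge.
apply: preimage_closed; last exact: closed_eq.
move=> x _; apply: continuous_big => //.
  exact: add_continuous.
by move=> i _; apply: coord_continuous.
Qed.

Lemma norm_le1 (R : realType) n (x : 'rV[R]_n) : `|x| <= \sum_i `|x ord0 i|.
Proof.
rewrite [`|x|]mx_normrE; apply: bigmax_le => //.
  by rewrite sumr_ge0.
move=> [a b] _ /=; rewrite (ord1 a).
by rewrite (bigD1 b) //= lerDl sumr_ge0.
Qed.

Lemma norm_ge1 (R : realType) n (x : 'rV[R]_n) : \sum_i `|x ord0 i| <= n%:R * `|x|.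
Proof.
have h : forall i, `|x ord0 i| <= `|x|.
  move=> i; rewrite [`|x|]mx_normrE.
  exact: (le_bigmax 0 (fun ij : 'I_1 * 'I_n => `|x ij.1 ij.2|) (ord0, i)).
apply: le_trans (ler_sum _ (fun i _ => h i)) _.
by rewrite sumr_const card_ord mulr_natl.
Qed.

Lemma tele (R : realType) (m : nat) (a b : nat -> R) :
  (forall j, 0 <= a j) -> (forall j, 0 <= b j) ->
  `|\prod_(j < m) a j - \prod_(j < m) b j| <=
  \sum_(l < m) \prod_(j < m)
     (if (j < l)%N then b j else if (j == l :> nat) then `|a j - b j| else a j).
Proof.
move=> a0 b0; elim: m => [|m IH]; first by rewrite !big_ord0 subrr normr0.
rewrite big_ord_recr /= !big_ord_recr /=.
have -> : \prod_(i < m) a i * a m - \prod_(i < m) b i * b m =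
   (\prod_(i < m) a i - \prod_(i < m) b i) * a m + \prod_(i < m) b i * (a m - b m).
  by ring.
apply: (le_trans (ler_normD _ _)); apply: lerD.
  rewrite normrM (ger0_norm (a0 m)).
  apply: le_trans (ler_wpM2r (a0 m) IH) _.
  rewrite mulr_suml; apply: ler_sum => l _.
  rewrite big_ord_recr /= ltnNge ltnW //= gtn_eqF //.
rewrite ltnn eqxx normrM ger0_norm ?prodr_ge0 //.
apply: ler_wpM2r => //; rewrite le_eqVlt; apply/orP; left; apply/eqP.
by apply: eq_bigr => j _; rewrite ltn_ord.
Qed.

Lemma sum_prod (R : realType) (m n : nat) (x : 'I_n -> R) :
  \sum_(f : {ffun 'I_m -> 'I_n}) \prod_(j < m) x (f j) = (\sum_i x i) ^+ m.
Proof.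
rewrite -(bigA_distr_bigA (fun (j : 'I_m) (i : 'I_n) => x i)) /=.
by rewrite prodr_const card_ord.
Qed.

Lemma pr_lip (R : realType) (m n : nat) (x y : 'I_n -> R) :
  (forall i, 0 <= x i) -> (forall i, 0 <= y i) ->
  \sum_i x i = 1 -> \sum_i y i = 1 ->
  \sum_(f : {ffun 'I_m.+1 -> 'I_n}) `|\prod_j x (f j) - \prod_j y (f j)|
   <= m.+1%:R * \sum_i `|x i - y i|.
Proof.
move=> x0 y0 sx sy.
pose g (l j : nat) (i : 'I_n) :=
  if (j < l)%N then y i else if (j == l) then `|x i - y i| else x i.
have step : forall f : {ffun 'I_m.+1 -> 'I_n},
  `|\prod_j x (f j) - \prod_j y (f j)| <=
  \sum_(l < m.+1) \prod_(j < m.+1) g l j (f j).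
  move=> f.
  have := @tele R m.+1 (fun j => x (f (inord j))) (fun j => y (f (inord j)))
    (fun j => x0 _) (fun j => y0 _).
  have E : forall h : 'I_n -> R, \prod_(j < m.+1) h (f (inord j)) = \prod_j h (f j).
    by move=> h; apply: eq_bigr => j _; rewrite inord_val.
  rewrite !E => /le_trans; apply; apply: ler_sum => l _.
  rewrite le_eqVlt; apply/orP; left; apply/eqP; apply: eq_bigr => j _.
  by rewrite /g inord_val; case: ifP => //; case: ifP.
apply: (le_trans (ler_sum _ (fun f _ => step f))).
rewrite exchange_big /=. 
rewrite (eq_bigr (fun _ => \sum_i `|x i - y i|)); last first.
  move=> l _; rewrite -(bigA_distr_bigA (fun (j : 'I_m.+1) (i : 'I_n) => g l j i)) /=.
  rewrite (bigD1 l) //= [X in _ * X]big1 ?mulr1.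
    by apply: eq_bigr => i _; rewrite /g ltnn eqxx.
  move=> j jl; have [jl'|jl'] := boolP (j < l)%N.
    by rewrite -sy; apply: eq_bigr => i _; rewrite /g jl'.
  rewrite -sx; apply: eq_bigr => i _; rewrite /g (negbTE jl') ifF //.
  exact: negbTE jl.
by rewrite sumr_const card_ord mulr_natl.
Qed.

Section Main.
Context (R : realType) (m n : nat) (P : 'I_n -> {ffun 'I_m.+1 -> 'I_n} -> R)
  (alpha : R) (v : 'I_n -> R).
Hypothesis P0 : forall i f, 0 <= P i f.
Hypothesis P1 : forall f, \sum_(i < n) P i f <= 1.
Hypothesis v0 : forall i, 0 <= v i.
Hypothesis v1 : \sum_(i < n) v i = 1.
Hypothesis a0 : 0 <= alpha.
Hypothesis a1 : alpha < 1.

Definition tap (x : 'I_n -> R) i :=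
  \sum_(f : {ffun 'I_m.+1 -> 'I_n}) P i f * \prod_(j < m.+1) x (f j).
Definition TP x := \sum_i tap x i.
Definition cP f := \sum_i P i f.
Definition Fm x i := alpha * tap x i + (1 - alpha * TP x) * v i.
Definition simplex (x : 'I_n -> R) := (forall i, 0 <= x i) /\ \sum_i x i = 1.

Lemma TP_eq x : TP x = \sum_f cP f * \prod_(j < m.+1) x (f j).
Proof.
rewrite /TP /tap exchange_big /=; apply: eq_bigr => f _.
by rewrite /cP mulr_suml.
Qed.

Lemma TP_bnd x : simplex x -> 0 <= TP x <= 1.
Proof.
move=> [x0 x1]; rewrite TP_eq; apply/andP; split.
  by apply: sumr_ge0 => f _; rewrite mulr_ge0 ?sumr_ge0 ?prodr_ge0.
apply: (@le_trans _ _ (\sum_(f : {ffun 'I_m.+1 -> 'I_n}) \prod_(j < m.+1) x (f j))).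
  by apply: ler_sum => f _; apply: ler_piMl; [exact: prodr_ge0 | exact: P1].
by rewrite sum_prod x1 expr1n.
Qed.

Lemma F_simplex x : simplex x -> simplex (Fm x).
Proof.
move=> sx; have /andP[T0 T1] := TP_bnd sx; have [x0 x1] := sx.
have h : 0 <= 1 - alpha * TP x.
  by rewrite subr_ge0; apply: le_trans (ltW a1); apply: ler_piMr.
split.
  move=> i; rewrite /Fm addr_ge0 ?mulr_ge0 //.
  by rewrite /tap sumr_ge0 // => f _; rewrite mulr_ge0 ?prodr_ge0.
rewrite /Fm big_split /= -mulr_sumr -mulr_sumr v1 -/(TP x); ring.
Qed.

Lemma F_lip x y : simplex x -> simplex y ->
  \sum_i `|Fm x i - Fm y i| <= alpha * m.+1%:R * \sum_i `|x i - y i|.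
Proof.
move=> sx sy; have [x0 x1] := sx; have [y0 y1] := sy.
pose D (f : {ffun 'I_m.+1 -> 'I_n}) := \prod_(j < m.+1) x (f j) - \prod_(j < m.+1) y (f j).
have SD : \sum_f D f = 0.
  by rewrite /D sumrB !sum_prod x1 y1 subrr.
pose w i (f : {ffun 'I_m.+1 -> 'I_n}) := P i f + (1 - cP f) * v i.
have w0 : forall i f, 0 <= w i f.
  move=> i f; rewrite addr_ge0 ?mulr_ge0 // subr_ge0; exact: P1.
have E : forall i, Fm x i - Fm y i = alpha * \sum_f D f * w i f.
  move=> i.
  have e1 : tap x i - tap y i = \sum_f P i f * D f.
    by rewrite /tap -sumrB; apply: eq_bigr => f _; rewrite /D mulrBr.
  have e2 : TP x - TP y = \sum_f cP f * D f.
    by rewrite !TP_eq -sumrB; apply: eq_bigr => f _; rewrite /D mulrBr.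
  have e3 : \sum_f D f * w i f = \sum_f P i f * D f + v i * \sum_f D f
                                 - v i * \sum_f cP f * D f.
    rewrite /w !mulr_sumr -big_split -sumrB /=; apply: eq_bigr => f _.
    ring.
  rewrite e3 SD mulr0 addr0 -e1 -e2 /Fm; ring.
have L : \sum_i `|Fm x i - Fm y i| <= alpha * \sum_f `|D f|.
  apply: le_trans (_ : \sum_i alpha * \sum_f `|D f| * w i f <= _).
    apply: ler_sum => i _; rewrite E normrM ger0_norm //.
    apply: ler_wpM2l => //; apply: le_trans (ler_norm_sum _ _ _) _.
    by apply: ler_sum => f _; rewrite normrM (ger0_norm (w0 i f)).
  rewrite -mulr_sumr; apply: ler_wpM2l => //.
  rewrite exchange_big /=; apply: ler_sum => f _.
  rewrite -mulr_sumr /w big_split /= -mulr_sumr v1 -/(cP f) mulr1 addrC subrK mulr1.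
  by [].
apply: le_trans L _; rewrite -mulrA; apply: ler_wpM2l => //.
exact: pr_lip.
Qed.


Definition n1 (x : 'I_n -> R) := \sum_i `|x i|.

Lemma iter_simplex N x : simplex x -> simplex (iter N Fm x).
Proof. by elim: N => //= N IH sx; apply: F_simplex; exact: IH. Qed.

Lemma iter_lip N x y : simplex x -> simplex y ->
  \sum_i `|iter N Fm x i - iter N Fm y i| <=
  (alpha * m.+1%:R) ^+ N * \sum_i `|x i - y i|.
Proof.
move=> sx sy; elim: N => [|N IH] /=; first by rewrite expr0 mul1r.
apply: le_trans (F_lip (iter_simplex N sx) (iter_simplex N sy)) _.
have h0 : 0 <= alpha * m.+1%:R by rewrite mulr_ge0.
by apply: le_trans (ler_wpM2l h0 IH) _; rewrite exprS mulrA.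
Qed.

End Main.

Lemma fix_unique (R : realType) n (H : ('I_n -> R) -> ('I_n -> R)) (c : R) a b :
  c < 1 -> (forall i, H a i = a i) -> (forall i, H b i = b i) ->
  \sum_i `|H a i - H b i| <= c * \sum_i `|a i - b i| -> a = b.
Proof.
move=> c1 fa fb hl.
have S0 : \sum_i `|a i - b i| = 0.
  have s0 : 0 <= \sum_i `|a i - b i| by rewrite sumr_ge0.
  have : \sum_i `|a i - b i| <= c * \sum_i `|a i - b i|.
    by apply: le_trans hl; rewrite le_eqVlt; apply/orP; left; apply/eqP;
       apply: eq_bigr => i _; rewrite fa fb.
  move=> h; apply/eqP; rewrite eq_le s0 andbT.
  have : (1 - c) * \sum_i `|a i - b i| <= 0 by rewrite mulrBl mul1r subr_le0.
  rewrite pmulr_rle0 // subr_gt0 //.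
apply: funext => i; apply/eqP; rewrite -subr_eq0 -normr_eq0; apply/eqP.
move/eqP: S0; rewrite psumr_eq0 // => /allP /(_ i) h.
by apply/eqP; apply: h; rewrite mem_index_enum.
Qed.

Lemma bernoulli (R : realType) (r : R) N : 0 <= r -> 1 + N%:R * r <= (1 + r) ^+ N.
Proof.
move=> r0; elim: N => [|N IH]; first by rewrite mul0r addr0 expr0.
rewrite exprS; apply: le_trans (_ : (1 + r) * (1 + N%:R * r) <= _).
  have N0 : (0 : R) <= N%:R by [].
  rewrite -natr1 mulrDl mul1r; nra.
by apply: ler_wpM2l => //; rewrite addr_ge0.
Qed.

Lemma small_pow (R : realType) (q c : R) : 0 <= q -> q < 1 -> 0 <= c ->
  exists N, q ^+ N * c < 1.
Proof.
move=> q0 q1 c0; have [->|qn0] := eqVneq q 0.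
  by exists 1%N; rewrite expr1 mul0r.
have qp : 0 < q by rewrite lt_def qn0.
pose r := q^-1 - 1.
have rp : 0 < r by rewrite subr_gt0 invf_gt1.
have hN := @archi_boundP R (c / r) (divr_ge0 c0 (ltW rp)).
exists (Num.Def.archi_bound (c / r)); set N := Num.Def.archi_bound _ in hN *.
have b := bernoulli N (ltW rp).
have e : 1 + r = q^-1 by rewrite /r addrC subrK.
rewrite e exprVn in b.
have qN : 0 < q ^+ N by rewrite exprn_gt0.
have : c < N%:R * r by rewrite -ltr_pdivrMr.
move=> h.
have : c < (q ^+ N)^-1 by apply: lt_le_trans b; apply: lt_le_trans h _; rewrite lerDr.
by rewrite -(ltr_pM2l qN) mulfV ?gt_eqF.
Qed.

Lemma tap_scale (R : realType) m n (P : 'I_n -> {ffun 'I_m.+1 -> 'I_n} -> R)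
   (c : R) (x : 'I_n -> R) i :
  tap P (fun j => c * x j) i = c ^+ m.+1 * tap P x i.
Proof.
rewrite /tap mulr_sumr; apply: eq_bigr => f _.
by rewrite big_split /= prodr_const card_ord mulrCA.
Qed.

Lemma TP_scale (R : realType) m n (P : 'I_n -> {ffun 'I_m.+1 -> 'I_n} -> R)
   (c : R) (x : 'I_n -> R) :
  TP P (fun j => c * x j) = c ^+ m.+1 * TP P x.
Proof. by rewrite /TP mulr_sumr; apply: eq_bigr => i _; rewrite tap_scale. Qed.

Lemma TP_ge0 (R : realType) m n (P : 'I_n -> {ffun 'I_m.+1 -> 'I_n} -> R)
   (x : 'I_n -> R) : (forall i f, 0 <= P i f) -> (forall i, 0 <= x i) -> 0 <= TP P x.
Proof.
move=> P0 x0; rewrite /TP sumr_ge0 // => i _; rewrite /tap sumr_ge0 // => f _.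
by rewrite mulr_ge0 ?prodr_ge0.
Qed.

Unset Implicit Arguments.

Theorem corollary3p11 (R : realType) (k n : nat) (hk : (2 <= k)%N) (hn : (1 <= n)%N)
  (P : tensor R k n) (v : 'I_n -> R) (alpha : R)
  (hP : col_substochastic P) (hv : stochastic_vec v)
  (ha0 : 0 <= alpha) (ha1 : alpha < 1) (hs : varsigma k alpha < 1) :
  exists y : 'I_n -> R,
    [/\ in_Delta k alpha y, mlppr_sol alpha P v y &
        forall z : 'I_n -> R, in_Delta k alpha z -> mlppr_sol alpha P v z ->
          forall i, z i = y i].
Proof.
move: P hP hs; case: k hk => [|[|k']] // _ P [P0 P1] hs.
case: hv => v0 v1.
have e1 : ((k'.+2)%:R - 2 : R) = k'%:R by rewrite -[k'.+2]addn2 natrD addrK.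
have e2 : ((k'.+2)%:R - 1 : R) = k'.+1%:R by rewrite -[k'.+2]addn1 natrD addrK.
pose q := alpha * k'.+1%:R.
have q0 : 0 <= q by rewrite mulr_ge0.
have q1 : q < 1.
  move: hs; rewrite /varsigma e1 e2.
  have e3 : (2 * k'.+2 - 3 = k'.+1 + k')%N by lia.
  rewrite e3 natrD.
  have pw1 : 1 <= powR (1 - alpha) (- (k'%:R / k'.+1%:R)).
    rewrite -[X in X <= _](powRr0 (1 - alpha)); apply: ger_powR.
      by apply/andP; split; lra.
    by rewrite oppr_le0 divr_ge0.
  move=> hs; apply: le_lt_trans hs.
  have K0 : (0 : R) <= k'%:R by [].
  apply: (@le_trans _ _ ((k'.+1%:R + k'%:R) * alpha * 1)).
    rewrite /q; nra.
  by apply: ler_wpM2l => //; rewrite mulr_ge0 // addr_ge0.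
have [N hN] := small_pow q0 q1 (ler0n R n).
have qN0 : 0 <= q ^+ N by rewrite exprn_ge0.
have qN1 : q ^+ N < 1.
  apply: le_lt_trans hN; rewrite ler_peMr // (ler1n R n) //.
pose F := Fm P alpha v.
pose FN := iter N F.
pose G (x : 'rV[R]_n) : 'rV[R]_n := \row_i FN (fun j => x ord0 j) i.
have iS := iter_simplex P0 P1 v0 v1 ha0 ha1.
have iL := iter_lip P0 P1 v0 v1 ha0 ha1.
have GU : forall x, @Usimp R n x -> Usimp (G x).
  move=> x Ux; have [h1 h2] := iS N _ Ux; split.
    by move=> i; rewrite mxE; exact: h1.
  by rewrite -h2; apply: eq_bigr => i _; rewrite mxE.
have GL : forall x y, @Usimp R n x -> @Usimp R n y -> `|G x - G y| <= (q ^+ N * n%:R) * `|x - y|.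
  move=> x y Ux Uy; apply: le_trans (norm_le1 _) _.
  have -> : \sum_i `|(G x - G y) ord0 i| = \sum_i `|FN (fun j => x ord0 j) i - FN (fun j => y ord0 j) i|.
    by apply: eq_bigr => i _; rewrite !mxE.
  apply: le_trans (iL N _ _ Ux Uy) _.
  rewrite -mulrA; apply: ler_wpM2l => //.
  apply: le_trans (norm_ge1 (x - y)); rewrite le_eqVlt; apply/orP; left; apply/eqP.
  by apply: eq_bigr => i _; rewrite !mxE.
have U0 : @Usimp R n !=set0.
  exists (\row_i v i); split; first by move=> i; rewrite mxE.
  by rewrite -v1; apply: eq_bigr => i _; rewrite mxE.
have [p Up pG] := banach_rV (mulr_ge0 qN0 (ler0n R n)) hN GU GL (@Usimp_closed R n) U0.
pose xs := fun j => p ord0 j.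
have sxs : simplex xs := Up.
have fixN : forall i, FN xs i = xs i.
  by move=> i; have := congr1 (fun M : 'rV[R]_n => M ord0 i) pG; rewrite mxE /xs => <-.
have fixNf : FN xs = xs by apply: funext.
have Ffix : F xs = xs.
  apply: (@fix_unique R n FN (q ^+ N) (F xs) xs qN1) => //.
    by move=> i; rewrite /FN -iterSr iterS -/FN fixNf.
  exact: iL (F_simplex P0 P1 v0 v1 ha0 ha1 sxs) sxs.
have /andP[T0 T1] := TP_bnd P0 P1 sxs.
pose s' := 1 - alpha * TP P xs.
have s'a : 1 - alpha <= s' by rewrite /s' lerD2l lerN2 ler_piMr.
have s'p : 0 < s' by apply: lt_le_trans s'a; rewrite subr_gt0.
pose s := powR s' (- (1 / k'.+1%:R)).
have s0 : 0 <= s by apply: powR_ge0.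
have K1 : (k'.+1%:R : R) != 0 by rewrite pnatr_eq0.
have hsm : s ^+ k'.+1 = s'^-1.
  rewrite /s -powR_mulrn ?powR_ge0 // -powRrM mulNr div1r mulVf //.
  by rewrite powR_inv1 // ltW.
have Fi : forall i, xs i = alpha * tap P xs i + s' * v i.
  by move=> i; rewrite -{1}Ffix /F /Fm mulrC.
have sxs1 : \sum_i xs i = 1 by case: sxs.
exists (fun i => s * xs i); split.
- split; first by move=> i; rewrite mulr_ge0 //; case: sxs => + _; apply.
  rewrite -mulr_sumr sxs1 mulr1 e2.
  have a1p : 0 < 1 - alpha by rewrite subr_gt0.
  rewrite /s !powRN lef_pV2 ?posrE ?powR_gt0 //.
  apply: ge0_ler_powR; [by rewrite divr_ge0|by rewrite nnegrE ltW|by rewrite nnegrE ltW|exact: s'a].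
- move=> i; rewrite -mulr_sumr sxs1 mulr1.
  have -> : (k'.+2 - 2 = k')%N by rewrite subSS subSS subn0.
  change (tapply P (fun i => s * xs i) i) with (tap P (fun i => s * xs i) i).
  rewrite tap_scale mulrA -exprSr hsm [X in _ * X - _ = _]Fi.
  have s'n : s' != 0 by rewrite gt_eqF.
  by rewrite mulrDr mulrA mulVf // mul1r mulrCA addrAC subrr add0r.
move=> z [z0 _] zsol i.
pose t := \sum_j z j.
have t0 : 0 <= t by rewrite sumr_ge0.
have ek : (k'.+2 - 2 = k')%N by rewrite subSS subSS subn0.
have zeq : forall i, t ^+ k' * z i - alpha * tap P z i = v i.
  by move=> j; have := zsol j; rewrite ek.
have zsum : t ^+ k'.+1 - alpha * TP P z = 1.
  rewrite -v1 -(eq_bigr _ (fun j _ => zeq j)) sumrB -mulr_sumr -mulr_sumr.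
  by rewrite -/t exprSr.
have TPz0 : 0 <= TP P z by apply: TP_ge0.
have tp : 0 < t.
  rewrite lt_def t0 andbT; apply/eqP => t00.
  move: zsum; rewrite t00 expr0n /= => h.
  have : 0 <= alpha * TP P z by rewrite mulr_ge0.
  lra.
have tn : t != 0 by rewrite gt_eqF.
pose x := fun j => z j / t.
have zE : z = (fun j => t * x j).
  by apply: funext => j; rewrite /x mulrC divfK.
have sx : simplex x.
  split; first by move=> j; rewrite /x divr_ge0.
  by rewrite /x -mulr_suml -/t mulfV.
pose T := t ^+ k'.+1.
have Tn : T != 0 by rewrite expf_neq0.
have xeq : forall j, T * (x j - alpha * tap P x j) = v j.
  move=> j; rewrite -(zeq j) zE tap_scale -/T; rewrite /T exprS; ring.
have xsum : T * (1 - alpha * TP P x) = 1.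
  by rewrite mulrBr mulr1 mulrCA /T -TP_scale -zE; exact: zsum.
have Fx : F x = x.
  apply: funext => j; apply: (mulfI Tn).
  rewrite /F /Fm mulrDr [T * (_ * v j)]mulrA xsum mul1r -(xeq j) mulrBr.
  by rewrite addrC subrK.
have xxs : x = xs.
  apply: (@fix_unique R n F q x xs q1).
  - by move=> j; rewrite Fx.
  - by move=> j; rewrite Ffix.
  exact: (F_lip P0 P1 v0 v1 ha0 sx sxs).
have Ts : T = s ^+ k'.+1.
  have s'n0 : s' != 0 by rewrite gt_eqF.
  rewrite hsm; apply: (mulfI s'n0); rewrite mulfV //.
  by rewrite /s' -xxs mulrC xsum.
have ts : t = s.
  by apply/eqP; rewrite -(eqrXn2 (ltn0Sn k') t0 s0) -/T Ts.
by rewrite zE /= ts xxs.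
Qed.
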